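(* For terms $\Gamma\vdash s,t:X$ of the language $\mathbf{PSL}$, $s\approx_{\mathbf{PSL}}t$ if and only if $[\![s]\!]\propto[\![t]\!]$, i.e. there is $\lambda>0$ with $[\![s]\!](y|\gamma)=\lambda[\![t]\!](y|\gamma)$ for all $\gamma,y$. That is, $\mathrm{FinProjStoch}$ is fully abstract for $\mathbf{PSL}$.
   Context: $\mathbf{PSL}$ is the following first-order language. Types: $A::=X\mid\mathsf{unit}\mid A\ast A$ where $X$ ranges over finite sets. Terms: $t::=x\mid()\mid(t,t)\mid\pi_i t\mid \underline f(t)\mid\mathrm{let}\ x=t_1\ \mathrm{in}\ t_2$, where $\underline f:A\to B$ ranges over all subprobability kernels between the finite sets interpreting $A$ and $B$ (this includes exact conditioning $(=:=):X\times X\to D_{\le1}(1)$, $(x,y)\mapsto[x=y]$); typing is the usual one ($\Gamma\vdash \underline f(t):B$ if $\Gamma\vdash t:A$; let binds $x$ in $t_2$; $\pi_i$ projects from pairs). Types denote finite sets ($[\![\mathsf{unit}]\!]=\{*\}$, $[\![A\ast B]\!]=[\![A]\!]\times[\![B]\!]$, contexts by products), and a term $\Gamma\vdash t:A$ denotes a subprobability kernel $[\![t]\!](a|\gamma)$: $[\![x]\!](a|\gamma)=[a=\gamma_x]$; $[\![()]\!]( *|\gamma)=1$; $[\![(s,t)]\!]((a,b)|\gamma)=[\![s]\!](a|\gamma)[\![t]\!](b|\gamma)$; $[\![\pi_1t]\!](a|\gamma)=\sum_b[\![t]\!]((a,b)|\gamma)$ (similarly $\pi_2$); $[\![\underline f(t)]\!](b|\gamma)=\sum_a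 f(b|a)[\![t]\!](a|\gamma)$; $[\![\mathrm{let}\ x=s\ \mathrm{in}\ t]\!](b|\gamma)=\sum_a[\![s]\!](a|\gamma)[\![t]\!](b|\gamma,a)$. For a subdistribution $\varphi$ on a finite set, $\mathsf{normalize}(\varphi)=\varphi/Z$ with $Z=\sum_x\varphi(x)$ if $Z\neq0$, and $0$ otherwise. Closed programs $s,t$ are observationally equivalent, $s\approx t$, if $\mathsf{normalize}([\![s]\!])=\mathsf{normalize}([\![t]\!])$. Open terms $s,t$ are straight-line equivalent, $s\approx_{\mathbf{PSL}}t$, if $C[s]\approx C[t]$ for every closed well-typed $\mathbf{PSL}$ context $C[-]$ (a term with a hole, possibly binding the free variables of the hole). *)

(* Defs.v *)
From HB Require Import structures.
From mathcomp Require Import all_boot all_order all_algebra.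
From mathcomp Require Import reals.
Set Implicit Arguments. Unset Strict Implicit. Unset Printing Implicit Defensive.
Import Order.TTheory GRing.Theory Num.Theory.
Local Open Scope ring_scope.

Inductive ty : Type :=
| TFin : nat -> ty
| TUnit : ty
| TProd : ty -> ty -> ty.

Fixpoint den_ty (A : ty) : finType :=
  match A with
  | TFin n => 'I_n
  | TUnit => unit
  | TProd A B => (den_ty A * den_ty B)%type
  end.

(** Contexts as lists of types (de Bruijn; head = innermost binder). *)
Definition ctx := seq ty.

Fixpoint den_ctx (G : ctx) : finType :=
  match G with
  | [::] => unit
  | A :: G' => (den_ty A * den_ctx G')%type
  end.

Inductive var : ctx -> ty -> Type :=
| Vz G A : var (A :: G) A
| Vs G A B : var G A -> var (B :: G) A.

Fixpoint lookup G A (v : var G A) : den_ctx G -> den_ty A :=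
  match v in var G A return den_ctx G -> den_ty A with
  | Vz _ _ => fun g => g.1
  | Vs _ _ _ v' => fun g => lookup v' g.2
  end.

(** Subprobability kernels between finite sets: f(b|a) = kf a b. *)
Record kern (R : realType) (A B : finType) := Kern {
  kf : A -> B -> R;
  kf_ge0 : forall a b, 0 <= kf a b;
  kf_sub : forall a, \sum_b kf a b <= 1 }.

Inductive tm (R : realType) : ctx -> ty -> Type :=
| Var G A : var G A -> tm R G A
| Unit G : tm R G TUnit
| Pair G A B : tm R G A -> tm R G B -> tm R G (TProd A B)
| Fst G A B : tm R G (TProd A B) -> tm R G A
| Snd G A B : tm R G (TProd A B) -> tm R G B
| App G A B : kern R (den_ty A) (den_ty B) -> tm R G A -> tm R G B
| Let G A B : tm R G A -> tm R (A :: G) B -> tm R G B.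

(** Denotation [[t]](a | gamma) = den t gamma a. *)
Fixpoint den (R : realType) G A (t : tm R G A) : den_ctx G -> den_ty A -> R :=
  match t in tm _ G A return den_ctx G -> den_ty A -> R with
  | Var _ _ v => fun g a => if a == lookup v g then 1 else 0
  | Unit _ => fun _ _ => 1
  | Pair _ _ _ s t => fun g ab => den s g ab.1 * den t g ab.2
  | Fst _ _ _ t => fun g a => \sum_b den t g (a, b)
  | Snd _ _ _ t => fun g b => \sum_a den t g (a, b)
  | App _ _ _ f t => fun g b => \sum_a kf f a b * den t g a
  | Let _ _ _ s t => fun g b => \sum_a den s g a * den t (a, g) b
  end.

Definition normalize (R : realType) (T : finType) (phi : T -> R) : T -> R :=
  let Z := \sum_x phi x in
  fun x => if Z != 0 then phi x / Z else 0.

Definition obs_equiv (R : realType) A (s t : tm R [::] A) : Prop :=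
  normalize (den s tt) = normalize (den t tt).

(** One-hole contexts C[-] with hole of type G |- _ : X; the context itself
    has type D |- C : B.  The hole sits at a point where the locally bound
    variables are exactly G (so C binds the free variables of the hole). *)
Inductive pctx (R : realType) (G : ctx) (X : ty) : ctx -> ty -> Type :=
| CHole : pctx R G X G X
| CPairL D A B : pctx R G X D A -> tm R D B -> pctx R G X D (TProd A B)
| CPairR D A B : tm R D A -> pctx R G X D B -> pctx R G X D (TProd A B)
| CFst D A B : pctx R G X D (TProd A B) -> pctx R G X D A
| CSnd D A B : pctx R G X D (TProd A B) -> pctx R G X D B
| CApp D A B : kern R (den_ty A) (den_ty B) -> pctx R G X D A -> pctx R G X D B
| CLetL D A B : pctx R G X D A -> tm R (A :: D) B -> pctx R G X D B
| CLetR D A B : tm R D A -> pctx R G X (A :: D) B -> pctx R G X D B.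

Fixpoint plug (R : realType) G X D B (C : pctx R G X D B) (s : tm R G X)
  : tm R D B :=
  match C in pctx _ _ _ D B return tm R D B with
  | CHole => s
  | CPairL _ _ _ C' t => Pair (plug C' s) t
  | CPairR _ _ _ t C' => Pair t (plug C' s)
  | CFst _ _ _ C' => Fst (plug C' s)
  | CSnd _ _ _ C' => Snd (plug C' s)
  | CApp _ _ _ f C' => App f (plug C' s)
  | CLetL _ _ _ C' t => Let (plug C' s) t
  | CLetR _ _ _ t C' => Let t (plug C' s)
  end.

Definition psl_equiv (R : realType) G X (s t : tm R G X) : Prop :=
  forall B (C : pctx R G X [::] B), obs_equiv (plug C s) (plug C t).

Definition proportional (R : realType) G X (s t : tm R G X) : Prop :=
  exists lam : R, 0 < lam /\ forall g y, den s g y = lam * den t g y.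

(* Main.v *)
Require Import Defs.
From mathcomp Require Import all_boot all_order all_algebra reals.
From Stdlib Require Import FunctionalExtensionality.
Set Implicit Arguments. Unset Strict Implicit. Unset Printing Implicit Defensive.
Import Order.TTheory GRing.Theory Num.Theory.
Local Open Scope ring_scope.

Lemma sum_unit (R : realType) (F : unit -> R) : \sum_(x : unit) F x = F tt.
Proof. by rewrite (big_pred1 tt) //; case. Qed.

Lemma den_ge0 (R : realType) G A (t : tm R G A) g a : 0 <= den t g a.
Proof.
elim: t g a => /=.
- by move=> ? ? v g a; case: ifP.
- by move=> *; exact: ler01.
- by move=> ? ? ? ? IH1 ? IH2 g a; rewrite mulr_ge0.
- by move=> ? ? ? ? IH g a; apply: sumr_ge0 => *.
- by move=> ? ? ? ? IH g a; apply: sumr_ge0 => *.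
- by move=> ? ? ? f ? IH g a; apply: sumr_ge0 => *; rewrite mulr_ge0 ?kf_ge0.
- by move=> ? ? ? ? IH1 ? IH2 g a; apply: sumr_ge0 => *; rewrite mulr_ge0.
Qed.

Lemma plug_scale (R : realType) G X (s t : tm R G X) (lam : R) :
  (forall g y, den s g y = lam * den t g y) ->
  forall D B (C : pctx R G X D B) g b,
    den (plug C s) g b = lam * den (plug C t) g b.
Proof.
move=> H D B C; elim: C => /=.
- exact: H.
- by move=> ? ? ? ? IH ? g b; rewrite IH mulrA.
- by move=> ? ? ? ? ? IH g b; rewrite IH mulrCA.
- by move=> ? ? ? ? IH g b; rewrite mulr_sumr; apply: eq_bigr => *; rewrite IH.
- by move=> ? ? ? ? IH g b; rewrite mulr_sumr; apply: eq_bigr => *; rewrite IH.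
- by move=> ? ? ? f ? IH g b; rewrite mulr_sumr; apply: eq_bigr => *; rewrite IH mulrCA.
- by move=> ? ? ? ? IH ? g b; rewrite mulr_sumr; apply: eq_bigr => *; rewrite IH mulrA.
- by move=> ? ? ? ? ? IH g b; rewrite mulr_sumr; apply: eq_bigr => *; rewrite IH mulrCA.
Qed.

Lemma normalize_scale (R : realType) (T : finType) (phi psi : T -> R) lam :
  0 < lam -> (forall x, phi x = lam * psi x) -> normalize phi = normalize psi.
Proof.
move=> lam0 H; apply: functional_extensionality => x; rewrite /normalize.
have -> : \sum_x phi x = lam * \sum_x psi x by rewrite mulr_sumr; apply: eq_bigr.
have l0 : lam != 0 by rewrite gt_eqF.
rewrite mulf_eq0 (negbTE l0) /= H.
case: ifP => // _.
by rewrite invfM mulrACA divff // mul1r.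
Qed.
Lemma zero_transfer (R : realType) (T : finType) (phi psi : T -> R) :
  (forall x, 0 <= psi x) ->
  (forall x, normalize phi x = normalize psi x) ->
  \sum_x phi x = 0 -> \sum_x psi x = 0.
Proof.
move=> p0 H Z; apply/eqP; apply/negPn/negP => Zt.
suff : \sum_x psi x = 0 by move/eqP; rewrite (negbTE Zt).
apply: big1 => x _.
have := H x; rewrite /normalize /= Z eqxx Zt => /esym /eqP.
by rewrite mulf_eq0 invr_eq0 (negbTE Zt) orbF => /eqP.
Qed.

Lemma norm_prop (R : realType) (T : finType) (phi psi : T -> R) :
  (forall x, 0 <= phi x) -> (forall x, 0 <= psi x) ->
  (forall x, normalize phi x = normalize psi x) ->
  exists lam, 0 < lam /\ forall x, phi x = lam * psi x.
Proof.
move=> f0 p0 H.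
have sf0 : 0 <= \sum_x phi x by apply: sumr_ge0.
have sp0 : 0 <= \sum_x psi x by apply: sumr_ge0.
have [Zs|Zs] := eqVneq (\sum_x phi x) 0.
  have Zt := zero_transfer p0 H Zs.
  exists 1; split => // x.
  rewrite mul1r (psumr_eq0P (fun i _ => f0 i) Zs) //.
  by rewrite (psumr_eq0P (fun i _ => p0 i) Zt).
have [Zt|Zt] := eqVneq (\sum_x psi x) 0.
  have := zero_transfer f0 (fun x => esym (H x)) Zt.
  by move/eqP; rewrite (negbTE Zs).
exists ((\sum_x phi x) / (\sum_x psi x)); split.
  by rewrite divr_gt0 // lt_def ?Zs ?Zt.
move=> x; have := H x; rewrite /normalize Zs Zt /= => E.
by rewrite mulrAC -mulrA -E mulrCA divff // mulr1.
Qed.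
Fixpoint ctx_ty (E : ctx) : ty :=
  match E with [::] => TUnit | A :: E' => TProd A (ctx_ty E') end.

Fixpoint tup (R : realType) (E : ctx) :
  forall D, (forall A, var E A -> var D A) -> tm R D (ctx_ty E) :=
  match E return forall D, (forall A, var E A -> var D A) -> tm R D (ctx_ty E) with
  | [::] => fun D _ => Unit R D
  | A :: E' => fun D f =>
      Pair (Var R (f A (Vz E' A))) (@tup R E' D (fun B v => f B (@Vs E' B A v)))
  end.

Fixpoint encv (E : ctx) : (forall A, var E A -> den_ty A) -> den_ty (ctx_ty E) :=
  match E return (forall A, var E A -> den_ty A) -> den_ty (ctx_ty E) with
  | [::] => fun _ => tt
  | A :: E' => fun h => (h A (Vz E' A), @encv E' (fun B v => h B (@Vs E' B A v)))
  end.

Definition enc (E : ctx) (g : den_ctx E) : den_ty (ctx_ty E) :=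
  encv (fun A x => lookup x g).

Lemma enc_inj E : injective (@enc E).
Proof.
elim: E => [|A E IH] /=; first by case; case.
case=> a1 g1 [a2 g2] [e1 e2]; rewrite e1.
by have := IH g1 g2 e2 => ->.
Qed.

Lemma den_tup (R : realType) E D (f : forall A, var E A -> var D A) g v :
  den (tup R f) g v = if v == encv (fun A x => lookup (f A x) g) then 1 else 0.
Proof.
elim: E D f g v => [|A E IH] D f g v /=; first by case: v.
case: v => v1 v2; rewrite IH xpair_eqE.
by case: (v1 == _); case: (v2 == _); rewrite ?mulr1 ?mulr0.
Qed.

Definition ukern (R : realType) (T : finType) : kern R unit T.
Proof.
refine (@Kern R unit T (fun _ _ => (#|T|%:R)^-1) _ _).
- by move=> _ _; rewrite invr_ge0 ler0n.
- move=> _; rewrite sumr_const.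
  have [->|n0] := eqVneq #|T| 0%N; first by rewrite mulr0n ler01.
  by rewrite (_ : #|xpredT| = #|T|) // -[_ *+ #|T|]mulr_natr mulVf ?pnatr_eq0.
Defined.

Fixpoint wgt (R : realType) (E : ctx) : den_ctx E -> R :=
  match E return den_ctx E -> R with
  | [::] => fun _ => 1
  | A :: E' => fun g => (#|den_ty A|%:R)^-1 * @wgt R E' g.2
  end.

Lemma wgt_gt0 (R : realType) E (g : den_ctx E) : 0 < wgt R g.
Proof.
elim: E g => [|A E IH] g /=; first exact: ltr01.
rewrite mulr_gt0 // invr_gt0 ltr0n; apply/card_gt0P; by exists g.1.
Qed.

Fixpoint pre (R : realType) G0 X B (E : ctx) :
  pctx R G0 X E B -> pctx R G0 X [::] B :=
  match E return pctx R G0 X E B -> pctx R G0 X [::] B with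
  | [::] => fun c => c
  | A :: E' => fun c => @pre R G0 X B E' (CLetR (@App R E' TUnit A (ukern R (den_ty A)) (Unit R E')) c)
  end.

Lemma den_pre (R : realType) G0 X B (s : tm R G0 X) E (c : pctx R G0 X E B) b :
  den (plug (pre c) s) tt b = \sum_(g : den_ctx E) wgt R g * den (plug c s) g b.
Proof.
elim: E c => [|A E IH] c /=; first by rewrite sum_unit mul1r.
rewrite IH /=.
have -> : \sum_(g : den_ctx (A :: E)) #|den_ty A|%:R^-1 * wgt R g.2 * den (plug c s) g b
   = \sum_(a : den_ty A) \sum_(g : den_ctx E) #|den_ty A|%:R^-1 * wgt R g * den (plug c s) (a, g) b.
  by rewrite pair_bigA /=; apply: eq_bigr; case.
rewrite exchange_big /=.
apply: eq_bigr => g _; rewrite mulr_sumr; apply: eq_bigr => a _.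
by rewrite sum_unit mulr1 /= mulrA [_ * wgt _ _]mulrC.
Qed.

Definition theC (R : realType) G n : pctx R G (TFin n) [::] (TProd (TFin n) (ctx_ty G)) :=
  pre (CLetL (CHole R G (TFin n))
         (Pair (Var R (Vz G (TFin n))) (tup R (fun A x => @Vs G A (TFin n) x)))).

Lemma den_theC (R : realType) G n (s : tm R G (TFin n)) y g :
  den (plug (theC R G n) s) tt (y, enc g) = wgt R g * den s g y.
Proof.
rewrite /theC den_pre.
have inner : forall g', den (plug (CLetL (CHole R G (TFin n))
         (Pair (Var R (Vz G (TFin n))) (tup R (fun A x => @Vs G A (TFin n) x)))) s) g' (y, enc g)
   = den s g' y * (if enc g == enc g' then 1 else 0).
  move=> g' /=; rewrite (bigD1 y) //= big1 ?addr0.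
    by rewrite den_tup eqxx mul1r.
  by move=> y0 ny; rewrite eq_sym (negbTE ny) mul0r mulr0.
under eq_bigr do rewrite inner.
rewrite (bigD1 g) //= big1 ?addr0; first by rewrite eqxx mulr1.
move=> g0 ng; case: eqP; last by rewrite !mulr0.
by move/enc_inj => e; rewrite e eqxx in ng.
Qed.

Theorem proposition6p11 (R : realType) (G : ctx) (n : nat)
    (s t : tm R G (TFin n)) :
  psl_equiv s t <-> proportional s t.
Proof.
split.
- move=> H.
  have E := H _ (theC R G n).
  have [lam [l0 Hl]] := norm_prop (fun x => den_ge0 _ _ x) (fun x => den_ge0 _ _ x)
     (fun x => f_equal (fun f => f x) E).
  exists lam; split => // g y.
  have := Hl (y, enc g); rewrite !den_theC mulrCA => /mulfI; apply.
  by rewrite gt_eqF // wgt_gt0.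
- move=> [lam [l0 Hl]] B C; rewrite /obs_equiv.
  apply: (normalize_scale l0) => x.
  exact: plug_scale Hl _ _ C tt x.
Qed.
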